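(* Let $\mathfrak g$ be a finite-dimensional real Lie algebra having an ideal of codimension one isomorphic to the Heisenberg Lie algebra $\mathfrak H_{2m+1}$ (for some $m\ge1$). Then: (a) if $\mathfrak g$ is not unimodular, then no inner product on $\mathfrak g$ has a geodesic basis; (b) if $\mathfrak g$ is unimodular, then every inner product on $\mathfrak g$ has an orthonormal geodesic basis.
   Context: For an inner product $\langle\cdot,\cdot\rangle$ on a real Lie algebra $\mathfrak g$, a nonzero $X\in\mathfrak g$ is a geodesic element if $\langle X,[X,Y]\rangle=0$ for all $Y\in\mathfrak g$; a geodesic basis is a basis consisting of geodesic elements. A Lie algebra is unimodular if $\operatorname{Tr}(\operatorname{ad}(X))=0$ for all $X$. The Heisenberg Lie algebra $\mathfrak H_{2m+1}$ has basis $\{X_1,\dots,X_{2m+1}\}$ with nonzero brackets $[X_i,X_{i+m}]=X_{2m+1}$ for $i=1,\dots,m$ (and all other brackets of basis elements zero, up to antisymmetry). *)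

(* Defs.v *)
(* A finite-dimensional real Lie algebra is modelled as
   'rV[R]_n (R : realType) with a bracket satisfying the Lie axioms. *)
From mathcomp Require Import all_boot all_order all_algebra.
From mathcomp Require Import reals.
Set Implicit Arguments. Unset Strict Implicit. Unset Printing Implicit Defensive.
Import Order.TTheory GRing.Theory Num.Theory.
Local Open Scope ring_scope.

Section Defs.
Variables (R : realType) (n : nat).
Notation V := 'rV[R]_n.

Definition is_lie_bracket (br : V -> V -> V) : Prop :=
  [/\ (forall (a : R) x y z, br (a *: x + y) z = a *: br x z + br y z),
      (forall (a : R) x y z, br z (a *: x + y) = a *: br z x + br z y),
      (forall x, br x x = 0) &
      (forall x y z, br x (br y z) + br y (br z x) + br z (br x y) = 0)].

Definition is_inner_product (ip : V -> V -> R) : Prop :=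
  [/\ (forall (a : R) x y z, ip (a *: x + y) z = a * ip x z + ip y z),
      (forall x y, ip x y = ip y x) &
      (forall x, x != 0 -> 0 < ip x x)].

Definition ad_mx (br : V -> V -> V) (X : V) : 'M[R]_n := lin1_mx (br X).
Definition unimodular (br : V -> V -> V) : Prop :=
  forall X : V, \tr (ad_mx br X) = 0.

Definition geodesic (br : V -> V -> V) (ip : V -> V -> R) (X : V) : Prop :=
  X != 0 /\ forall Y : V, ip X (br X Y) = 0.

(* a basis of g, given as the rows of a square matrix B *)
Definition geodesic_basis (br : V -> V -> V) (ip : V -> V -> R) (B : 'M[R]_n) : Prop :=
  row_free B /\ forall i, geodesic br ip (row i B).

Definition orthonormal_rows (ip : V -> V -> R) (B : 'M[R]_n) : Prop :=
  forall i j, ip (row i B) (row j B) = (i == j)%:R.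
End Defs.

(* structure constants of the Heisenberg algebra H_{2m+1}, 0-indexed basis
   X_0..X_{2m}: [X_i, X_{i+m}] = X_{2m} for i < m, others zero *)
Definition heis_coef (R : realType) (m : nat) (i j : nat) : R :=
  if (i < m)%N && (j == i + m)%N then 1
  else if (j < m)%N && (i == j + m)%N then -1 else 0.

(* the rows of X span an ideal of codimension one of (R^n, br) and form a
   basis of it in which the brackets are those of H_{2m+1} *)
Definition heisenberg_codim1_ideal (R : realType) (n m : nat)
    (br : 'rV[R]_n -> 'rV[R]_n -> 'rV[R]_n) (X : 'M[R]_(m.*2.+1, n)) : Prop :=
  [/\ row_free X,
      (\rank X).+1 = n,
      (forall (Y v : 'rV[R]_n), (v <= X)%MS -> (br Y v <= X)%MS) &
      (forall i j : 'I_(m.*2.+1),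
          br (row i X) (row j X) = heis_coef R m i j *: row ord_max X)].

(* Main.v *)
Require Import Defs.
From mathcomp Require Import all_boot all_order all_algebra.
From mathcomp Require Import reals.
From mathcomp Require Import zify ring lra.
Set Implicit Arguments. Unset Strict Implicit. Unset Printing Implicit Defensive.
Import Order.TTheory GRing.Theory Num.Theory.
Local Open Scope ring_scope.

From Stdlib Require Classical_Prop.
Section Lin.
Variable R : realType.

Definition linV p q (f : 'rV[R]_p -> 'rV[R]_q) :=
  forall a x y, f (a *: x + y) = a *: f x + f y.

Section LinF.
Variables (p q : nat) (f : 'rV[R]_p -> 'rV[R]_q) (hf : linV f).
Lemma linV0 : f 0 = 0.
Proof. have H := hf 1 0 0; rewrite !scale1r addr0 in H. by apply: (addrI (f 0)); rewrite addr0 -H. Qed.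
Lemma linVD x y : f (x + y) = f x + f y.
Proof. by rewrite -{1}[x]scale1r hf scale1r. Qed.
Lemma linVZ a x : f (a *: x) = a *: f x.
Proof. by rewrite -[a *: x]addr0 hf linV0 addr0. Qed.
Lemma linVN x : f (- x) = - f x.
Proof. by rewrite -scaleN1r linVZ scaleN1r. Qed.
Lemma linV_sum I (r : seq I) (P : pred I) (F : I -> 'rV_p) :
  f (\sum_(i <- r | P i) F i) = \sum_(i <- r | P i) f (F i).
Proof. exact: (big_morph f linVD linV0). Qed.
Lemma lin1_mxE u : u *m lin1_mx f = f u.
Proof.
rewrite mulmx_sum_row {2}(row_sum_delta u) linV_sum.
apply: eq_bigr => i _; rewrite linVZ; congr (_ *: _).
by apply/rowP => j; rewrite !mxE.
Qed.
End LinF.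

Definition linS p (g : 'rV[R]_p -> R) :=
  forall a x y, g (a *: x + y) = a * g x + g y.

Section LinG.
Variables (p : nat) (g : 'rV[R]_p -> R) (hg : linS g).
Lemma linS0 : g 0 = 0.
Proof. have H := hg 1 0 0; rewrite !scale1r addr0 mul1r in H. by apply: (addrI (g 0)); rewrite addr0 -H. Qed.
Lemma linSD x y : g (x + y) = g x + g y.
Proof. by rewrite -{1}[x]scale1r hg mul1r. Qed.
Lemma linSZ a x : g (a *: x) = a * g x.
Proof. by rewrite -[a *: x]addr0 hg linS0 addr0. Qed.
Lemma linSN x : g (- x) = - g x.
Proof. by rewrite -scaleN1r linSZ mulN1r. Qed.
Lemma linS_sum I (r : seq I) (P : pred I) (F : I -> 'rV_p) :
  g (\sum_(i <- r | P i) F i) = \sum_(i <- r | P i) g (F i).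
Proof. exact: (big_morph g linSD linS0). Qed.
End LinG.

Lemma tr_basis n (P : 'M[R]_n) (f : 'rV_n -> 'rV_n) : linV f -> P \in unitmx ->
  \tr (lin1_mx f) = \sum_i (f (row i P) *m invmx P) 0 i.
Proof.
move=> hf hP.
have -> : lin1_mx f = invmx P *m (P *m lin1_mx f *m invmx P) *m P.
  by rewrite !mulmxA mulVmx // mul1mx mulmxKV.
rewrite mxtrace_mulC mulmxA mulmxV // mul1mx /mxtrace.
apply: eq_bigr => i _.
have -> : (P *m lin1_mx f *m invmx P) i i = (row i (P *m lin1_mx f *m invmx P)) 0 i by rewrite [RHS]mxE.
rewrite !row_mul lin1_mxE //.
Qed.

Section IP.
Variables (n : nat) (ip : 'rV[R]_n -> 'rV[R]_n -> R) (hip : is_inner_product ip).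
Lemma ipC x y : ip x y = ip y x. Proof. by case: hip. Qed.
Lemma ipL y : linS (fun x => ip x y). Proof. by case: hip => h _ _ a x z; apply: h. Qed.
Lemma ipR x : linS (fun y => ip x y).
Proof. by move=> a y z; rewrite !(ipC x); apply: ipL. Qed.
Lemma ipZl a x y : ip (a *: x) y = a * ip x y. Proof. exact: (linSZ (ipL y)). Qed.
Lemma ipZr a x y : ip x (a *: y) = a * ip x y. Proof. exact: (linSZ (ipR x)). Qed.
Lemma ipDl x x' y : ip (x + x') y = ip x y + ip x' y. Proof. exact: (linSD (ipL y)). Qed.
Lemma ipDr x y y' : ip x (y + y') = ip x y + ip x y'. Proof. exact: (linSD (ipR x)). Qed.
Lemma ipNl x y : ip (- x) y = - ip x y. Proof. exact: (linSN (ipL y)). Qed.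
Lemma ipNr x y : ip x (- y) = - ip x y. Proof. exact: (linSN (ipR x)). Qed.
Lemma ip0l y : ip 0 y = 0. Proof. exact: (linS0 (ipL y)). Qed.
Lemma ip0r x : ip x 0 = 0. Proof. exact: (linS0 (ipR x)). Qed.
Lemma ip_suml I (r : seq I) (P : pred I) (F : I -> 'rV_n) y :
  ip (\sum_(i <- r | P i) F i) y = \sum_(i <- r | P i) ip (F i) y.
Proof. exact: (linS_sum (ipL y)). Qed.
Lemma ip_sumr I (r : seq I) (P : pred I) (F : I -> 'rV_n) x :
  ip x (\sum_(i <- r | P i) F i) = \sum_(i <- r | P i) ip x (F i).
Proof. exact: (linS_sum (ipR x)). Qed.
Lemma ip_gt0 x : x != 0 -> 0 < ip x x. Proof. by case: hip => _ _; apply. Qed.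
Lemma ip_ge0 x : 0 <= ip x x.
Proof. by have [->|/ip_gt0/ltW //] := eqVneq x 0; rewrite ip0l. Qed.
Lemma ip_eq0 x : ip x x = 0 -> x = 0.
Proof. by have [//|/ip_gt0] := eqVneq x 0; move=> h e; rewrite e ltxx in h. Qed.

Definition nrm (v : 'rV_n) := (Num.sqrt (ip v v))^-1 *: v.
Lemma nrmE v : v != 0 -> ip (nrm v) (nrm v) = 1.
Proof.
move=> hv; rewrite /nrm ipZl ipZr mulrA -expr2 exprVn sqr_sqrtr ?ip_ge0 //.
by rewrite mulVf // gt_eqF // ip_gt0.
Qed.

Definition onfam d (g : 'I_d -> 'rV_n) := forall i j, ip (g i) (g j) = (i == j)%:R.

Lemma onb_coord (B : 'M_n) : orthonormal_rows ip B ->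
  B \in unitmx /\ forall v k, (v *m invmx B) 0 k = ip v (row k B).
Proof.
move=> hB.
pose C := \matrix_(i, j) ip ('e_i) (row j B).
have BC : B *m C = 1%:M.
  apply/matrixP => i j; rewrite !mxE -hB {1}(row_sum_delta (row i B)) ip_suml.
  by apply: eq_bigr => k _; rewrite ipZl !mxE.
have [uB _] := mulmx1_unit BC; split => // v k.
have -> : invmx B = C by rewrite -[C]mul1mx -(mulVmx uB) -mulmxA BC mulmx1.
rewrite !mxE {2}(row_sum_delta v) ip_suml; apply: eq_bigr => i _.
by rewrite ipZl mxE.
Qed.

Lemma tr_onb (B : 'M_n) f : orthonormal_rows ip B -> linV f ->
  \tr (lin1_mx f) = \sum_i ip (f (row i B)) (row i B).
Proof.
move=> hB hf; have [uB hc] := onb_coord hB.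
by rewrite (tr_basis hf uB); apply: eq_bigr => i _; rewrite hc.
Qed.

Definition perpf k (A : 'M[R]_(k, n)) (v : 'rV_n) : 'rV_k := \row_j ip v (row j A).
Lemma perpf_lin k (A : 'M_(k, n)) : linV (perpf A).
Proof. by move=> a x y; apply/rowP => j; rewrite !mxE ipDl ipZl. Qed.
Definition perpK k (A : 'M[R]_(k, n)) := kermx (lin1_mx (perpf A)).
Lemma perpKP k (A : 'M_(k, n)) v : (v <= perpK A)%MS -> forall j, ip v (row j A) = 0.
Proof.
rewrite sub_kermx lin1_mxE; last exact: perpf_lin.
move=> /eqP h j.
by have := congr1 (fun w : 'rV[R]_k => w 0 j) h; rewrite !mxE.
Qed.
Lemma perpK_rank p k (T : 'M_(p, n)) (A : 'M_(k, n)) :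
  (\rank T - k <= \rank (T :&: perpK A))%N.
Proof.
have := mxrank_sum_cap T (perpK A); have := rank_leq_col (T + perpK A)%MS.
rewrite /perpK mxrank_ker; have := rank_leq_col (lin1_mx (perpf A)).
have := rank_leq_row (lin1_mx (perpf A)). lia.
Qed.

Lemma onb_exists d : forall p (T : 'M_(p, n)), (d <= \rank T)%N ->
  exists g : 'I_d -> 'rV_n, (forall i, (g i <= T)%MS) /\ onfam g.
Proof.
elim: d => [|d IH] p T hT.
  by exists (fun _ => 0); split; case.
have : T != 0 by rewrite -mxrank_eq0; apply: contraTneq hT => ->.
case/matrix0Pn => i [j hij].
have v0 : row i T != 0.
  apply/eqP => /(congr1 (fun w : 'rV[R]_n => w 0 j)); rewrite !mxE; apply/eqP => //.
set u := nrm (row i T).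
have uT : (u <= T)%MS by rewrite scalemx_sub ?row_sub.
have hT' : (d <= \rank (T :&: perpK u))%N.
  apply: leq_trans (perpK_rank T u); lia.
have [g' [g'T g'o]] := IH _ _ hT'.
exists (fun k => if unlift ord0 k is Some j then g' j else u); split.
  move=> k; case: unliftP => [j' _|_] //.
  by apply: submx_trans (g'T j') (capmxSl _ _).
have g'u l : ip (g' l) u = 0.
  have := perpKP (submx_trans (g'T l) (capmxSr _ _)) 0.
  by rewrite rowE; have -> : 'e_0 *m u = u by rewrite -rowE; apply/rowP => r; rewrite mxE.
move=> k l; case: unliftP => [a ->|->]; case: unliftP => [b ->|->].
- by rewrite g'o (inj_eq lift_inj).
- by rewrite g'u eq_sym (negbTE (neq_lift _ _)).
- by rewrite ipC g'u (negbTE (neq_lift _ _)).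
- by rewrite eqxx nrmE.
Qed.

Section ZD.
Variables (L : 'rV[R]_n -> 'rV[R]_n) (hL : linV L).
Variable Pp : 'rV[R]_n -> Prop.
Hypothesis hPp : forall a b x y, Pp x -> Pp y -> Pp (a *: x + b *: y).
Let q v := ip v (L v).

Lemma q2 x y al be : q (al *: x + be *: y) =
  al ^+ 2 * q x + al * be * (ip x (L y) + ip y (L x)) + be ^+ 2 * q y.
Proof.
rewrite /q (linVD hL) !(linVZ hL) !ipDl !ipDr !ipZl !ipZr; ring.
Qed.

Lemma ip2 x y al be ga de : ip x x = 1 -> ip y y = 1 -> ip x y = 0 ->
  ip (al *: x + be *: y) (ga *: x + de *: y) = al * ga + be * de.
Proof.
move=> hx hy hxy; rewrite !ipDl !ipDr !ipZl !ipZr hx hy hxy (ipC y x) hxy; ring.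
Qed.

Lemma ip2w x y al be w : ip x w = 0 -> ip y w = 0 -> ip (al *: x + be *: y) w = 0.
Proof. by move=> hx hy; rewrite ipDl !ipZl hx hy !mulr0 addr0. Qed.

Lemma sum_two d (F G : 'I_d -> R) i j : i != j ->
  (forall k, k != i -> k != j -> F k = G k) ->
  \sum_k F k - F i - F j = \sum_k G k - G i - G j.
Proof.
move=> ij hFG.
rewrite (bigD1 i) //= (bigD1 j) 1?eq_sym //= [in RHS](bigD1 i) //= [in RHS](bigD1 j) 1?eq_sym //=.
have -> : \sum_(k | (k != i) && (k != j)) F k = \sum_(k | (k != i) && (k != j)) G k.
  by apply: eq_bigr => k /andP [ki kj]; apply: hFG.
ring.
Qed.

Lemma zero_diag d : forall N (g : 'I_d -> 'rV_n),
  (#|[pred i | q (g i) != 0%R]| <= N)%N -> onfam g -> (forall i, Pp (g i)) ->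
  \sum_i q (g i) = 0 ->
  exists g' : 'I_d -> 'rV_n, onfam g' /\ (forall i, Pp (g' i)) /\ (forall i, q (g' i) = 0).
Proof.
elim=> [|N IH] g hN hg hP hs.
  exists g; split => //; split => // i; apply/eqP/negPn/negP => hi.
  have : (0 < #|[pred i | q (g i) != 0%R]|)%N by apply/card_gt0P; exists i.
  lia.
case: (boolP [forall i, q (g i) == 0]) => [/forallP h|].
  by exists g; split => //; split => // i; apply/eqP.
case/forallPn => i0 hi0.
pose i : 'I_d := i0.
have hi : q (g i) != 0 := hi0.
clearbody i; clear i0 hi0.
have [j hj] : exists j, q (g i) * q (g j) < 0.
  case: (boolP [exists j, q (g i) * q (g j) < 0]) => [/existsP //|/existsPn hn].
  exfalso; move: hi; apply/negP; rewrite negbK.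
  have h0 : forall k, 0 <= q (g i) * q (g k) by move=> k; rewrite leNgt hn.
  have : \sum_k q (g i) * q (g k) = 0 by rewrite -mulr_sumr hs mulr0.
  move/(psumr_eq0P (fun k _ => h0 k)) => /(_ i isT) /eqP.
  by rewrite mulf_eq0 orbb.
have ij : i != j.
  by apply/eqP => e; move: hj; rewrite e -expr2 ltNge sqr_ge0.
set x := g i; set y := g j; set a := q x; set b := q y.
set s := ip x (L y) + ip y (L x).
have hab : a * b < 0 := hj.
have b0 : b != 0 by apply/eqP => e; move: hab; rewrite e mulr0 ltxx.
have D0 : 0 <= s ^+ 2 - 4 * a * b.
  have : 0 <= s ^+ 2 by apply: sqr_ge0.
  move: hab.
  lra.
set t := (Num.sqrt (s ^+ 2 - 4 * a * b) - s) / (2 * b).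
have ht : a + t * s + t ^+ 2 * b = 0.
  have hr := sqr_sqrtr D0.
  set r := Num.sqrt _ in hr.
  have b2 : 2 * b != 0 by rewrite mulf_eq0 negb_or b0 andbT pnatr_eq0.
  have hu : 2 * b * t = r - s by rewrite /t -/r mulrC divfK.
  have e : 4 * b * (a + t * s + t ^+ 2 * b) = 4 * a * b + 2 * s * (2 * b * t) + (2 * b * t) ^+ 2 by ring.
  rewrite hu in e.
  have e2 : 4 * a * b + 2 * s * (r - s) + (r - s) ^+ 2 = r ^+ 2 - (s ^+ 2 - 4 * a * b) by ring.
  rewrite e2 hr subrr in e.
  move/eqP: e; rewrite mulf_eq0 => /orP [|/eqP //].
  by rewrite mulf_eq0 (negbTE b0) orbF pnatr_eq0.
have t2 : 0 < 1 + t ^+ 2 by have := sqr_ge0 t; lra.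
set c := (Num.sqrt (1 + t ^+ 2))^-1.
have hc : c ^+ 2 * (1 + t ^+ 2) = 1.
  by rewrite /c exprVn sqr_sqrtr ?ltW // mulVf // gt_eqF.
have hx : ip x x = 1 by rewrite /x hg eqxx.
have hy : ip y y = 1 by rewrite /y hg eqxx.
have hxy : ip x y = 0 by rewrite /x /y hg (negbTE ij).
have hyx : ip y x = 0 by rewrite ipC.
have hxk k : k != i -> ip x (g k) = 0 by move=> ki; rewrite /x hg eq_sym (negbTE ki).
have hyk k : k != j -> ip y (g k) = 0 by move=> kj; rewrite /y hg eq_sym (negbTE kj).
set x' := c *: x + (c * t) *: y.
set y' := (- (c * t)) *: x + c *: y.
have qx' : q x' = 0.
  rewrite /x' q2 -/a -/b -/s.
  have -> : c ^+ 2 * a + c * (c * t) * s + (c * t) ^+ 2 * b = c ^+ 2 * (a + t * s + t ^+ 2 * b) by ring.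
  by rewrite ht mulr0.
have qxy : q x' + q y' = a + b.
  rewrite /x' /y' !q2 -/a -/b -/s.
  have -> : c ^+ 2 * a + c * (c * t) * s + (c * t) ^+ 2 * b +
    ((- (c * t)) ^+ 2 * a + - (c * t) * c * s + c ^+ 2 * b) = c ^+ 2 * (1 + t ^+ 2) * (a + b) by ring.
  by rewrite hc mul1r.
pose g2 k := if k == i then x' else if k == j then y' else g k.
have og2 : onfam g2.
  have ji : j != i by rewrite eq_sym.
  move=> k l; rewrite /g2.
  case: (eqVneq k i) => [ek|ki]; [|case: (eqVneq k j) => [ek|kj]];
  (case: (eqVneq l i) => [el|li]; [|case: (eqVneq l j) => [el|lj]]); subst;
  rewrite ?eqxx ?(negbTE ij) ?(negbTE ji) ?(negbTE ki) ?(negbTE kj) ?(negbTE li) ?(negbTE lj).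
  - by rewrite ip2 //= -hc; ring.
  - by rewrite ip2 //=; ring.
  - by rewrite ip2w ?hxk ?hyk // eq_sym (negbTE li).
  - by rewrite ip2 //=; ring.
  - by rewrite ip2 //= -hc; ring.
  - by rewrite ip2w ?hxk ?hyk // eq_sym (negbTE lj).
  - by rewrite ipC ip2w ?hxk ?hyk.
  - by rewrite ipC ip2w ?hxk ?hyk.
  - by rewrite hg.
have ji : j != i by rewrite eq_sym.
have g2i : g2 i = x' by rewrite /g2 eqxx.
have g2j : g2 j = y' by rewrite /g2 (negbTE ji) eqxx.
have g2k k : k != i -> k != j -> g2 k = g k.
  by move=> ki kj; rewrite /g2 (negbTE ki) (negbTE kj).
have Pg2 : forall k, Pp (g2 k).
  move=> k; rewrite /g2; case: ifP => _; first exact: (hPp _ _ (hP i) (hP j)).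
  by case: ifP => _; [exact: (hPp _ _ (hP i) (hP j))|].
have sg2 : \sum_k q (g2 k) = 0.
  have := @sum_two d (fun k => q (g2 k)) (fun k => q (g k)) i j ij
    (fun k ki kj => congr1 q (g2k k ki kj)).
  rewrite /= g2i g2j hs -/x -/y -/a -/b => h.
  move: h qxy; lra.
have cg2 : (#|[pred k | q (g2 k) != 0%R]| <= N)%N.
  have : [pred k | q (g2 k) != 0%R] \proper [pred k | q (g k) != 0%R].
    apply/properP; split.
      apply/subsetP => k; rewrite !inE.
      case: (eqVneq k i) => [->|ki]; first by rewrite g2i qx' eqxx.
      case: (eqVneq k j) => [->|kj]; first by rewrite (negbTE b0).
      by rewrite g2k.
    by exists i; rewrite !inE ?g2i ?qx' ?eqxx.
  move/proper_card => h; rewrite -ltnS; exact: leq_trans h hN.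
exact: (IH g2 cg2 og2 Pg2 sg2).
Qed.

End ZD.
End IP.

End Lin.

Section Heis.
Variables (R : realType) (m : nat) (hm : (0 < m)%N).
Local Notation N := (m.*2.+1).
Local Notation nn := (m.*2.+2).
Local Notation V := 'rV[R]_nn.
Variables (br : V -> V -> V) (hbr : is_lie_bracket br).
Variables (X : 'M[R]_(N, nn)) (hX : heisenberg_codim1_ideal br X).

Lemma brR x : linV (br x). Proof. by case: hbr => _ h _ _ a u v; apply: h. Qed.
Lemma brL y : linV (fun x => br x y). Proof. by case: hbr => h _ _ _ a u v; apply: h. Qed.
Lemma brxx x : br x x = 0. Proof. by case: hbr. Qed.
Lemma brJ x y w : br x (br y w) + br y (br w x) + br w (br x y) = 0. Proof. by case: hbr. Qed.
Lemma brDl x x' y : br (x + x') y = br x y + br x' y. Proof. exact: (linVD (brL y)). Qed.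
Lemma brDr x y y' : br x (y + y') = br x y + br x y'. Proof. exact: (linVD (brR x)). Qed.
Lemma brZl a x y : br (a *: x) y = a *: br x y. Proof. exact: (linVZ (brL y)). Qed.
Lemma brZr a x y : br x (a *: y) = a *: br x y. Proof. exact: (linVZ (brR x)). Qed.
Lemma brNl x y : br (- x) y = - br x y. Proof. exact: (linVN (brL y)). Qed.
Lemma brNr x y : br x (- y) = - br x y. Proof. exact: (linVN (brR x)). Qed.
Lemma br0l y : br 0 y = 0. Proof. exact: (linV0 (brL y)). Qed.
Lemma br0r x : br x 0 = 0. Proof. exact: (linV0 (brR x)). Qed.
Lemma br_suml I (r : seq I) (P : pred I) (F : I -> V) y :
  br (\sum_(i <- r | P i) F i) y = \sum_(i <- r | P i) br (F i) y.
Proof. exact: (linV_sum (brL y)). Qed.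
Lemma br_sumr I (r : seq I) (P : pred I) (F : I -> V) x :
  br x (\sum_(i <- r | P i) F i) = \sum_(i <- r | P i) br x (F i).
Proof. exact: (linV_sum (brR x)). Qed.
Lemma brA x y : br x y = - br y x.
Proof.
have := brxx (x + y); rewrite brDl !brDr !brxx add0r addr0 => /eqP.
by rewrite addr_eq0 => /eqP.
Qed.

Lemma hrf : row_free X. Proof. by case: hX. Qed.
Lemma hideal Y v : (v <= X)%MS -> (br Y v <= X)%MS. Proof. by case: hX => _ _ h _; apply: h. Qed.
Lemma hcoef i j : br (row i X) (row j X) = heis_coef R m i j *: row ord_max X.
Proof. by case: hX. Qed.

Local Notation z := (row ord_max X).

Definition coords (v : V) : 'rV[R]_N := v *m pinvmx X.
Lemma coordsK u : coords (u *m X) = u.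
Proof. by apply: (row_free_inj hrf); rewrite /coords mulmxKpV // submxMl. Qed.
Lemma coordsE v : (v <= X)%MS -> coords v *m X = v.
Proof. exact: mulmxKpV. Qed.

Lemma z0 : z != 0.
Proof.
apply/eqP => h; have : (delta_mx 0 ord_max : 'rV[R]_N) *m X = 0 *m X.
  by rewrite -rowE h mul0mx.
move/(row_free_inj hrf)/(congr1 (fun w : 'rV[R]_N => w 0 ord_max)).
by rewrite !mxE !eqxx /= => /eqP; rewrite oner_eq0.
Qed.

Lemma scal_z s1 s2 : s1 *: z = s2 *: z -> s1 = s2.
Proof.
move/eqP; rewrite -subr_eq0 -scalerBl scaler_eq0 (negbTE z0) orbF subr_eq0.
by move/eqP.
Qed.

Lemma hc_last (j : nat) : heis_coef R m j m.*2 = 0.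
Proof. rewrite /heis_coef; case: ifP => [/andP[]|_]; [lia|]; case: ifP => // /andP[]; lia. Qed.
Lemma hc_up (i j : nat) : (i < m)%N -> heis_coef R m j (i + m) = (j == i)%:R.
Proof.
move=> im; rewrite /heis_coef; case: (eqVneq j i) => [->|ji].
  by rewrite im eqxx.
case: ifP => [/andP[_ /eqP]|_]; first lia.
case: ifP => // /andP[]; lia.
Qed.
Lemma hc_dn (i j : nat) : (i < m)%N -> heis_coef R m j i = - (j == i + m)%:R.
Proof.
move=> im; rewrite /heis_coef; case: (eqVneq j (i + m)) => [->|ji].
  case: ifP => [/andP[]|_]; first lia.
  by rewrite im /= mulr1n.
case: ifP => [/andP[_ /eqP]|_]; first lia.
case: ifP => [/andP[_ /eqP]|_]; first lia.
by rewrite oppr0.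
Qed.

Lemma sum_delta (u : 'rV[R]_N) (k : 'I_N) (kk : nat) : kk = k ->
  \sum_j u 0 j * ((j : nat) == kk)%:R = u 0 k.
Proof.
move=> ->; rewrite (bigD1 k) //= eqxx mulr1 big1 ?addr0 // => j jk.
by rewrite (_ : ((j : nat) == k) = false) ?mulr0 //; apply/negbTE.
Qed.

Lemma brX u k : br (u *m X) (row k X) = (\sum_j u 0 j * heis_coef R m j k) *: z.
Proof.
rewrite mulmx_sum_row br_suml scaler_suml; apply: eq_bigr => j _.
by rewrite brZl hcoef scalerA.
Qed.

Lemma brXX u v : exists s, br (u *m X) (v *m X) = s *: z.
Proof.
exists (\sum_k v 0 k * \sum_j u 0 j * heis_coef R m j k).
rewrite [v *m X]mulmx_sum_row br_sumr scaler_suml; apply: eq_bigr => k _.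
by rewrite brZr brX scalerA.
Qed.

Definition Dc (Y : V) (k : 'I_N) := coords (br Y (row k X)).
Lemma DcE Y k : Dc Y k *m X = br Y (row k X).
Proof. by rewrite coordsE // hideal // row_sub. Qed.

Lemma jac Y (i ip : 'I_N) : (i < m)%N -> (ip : nat) = (i + m)%N ->
  br Y z = (Dc Y i 0 i + Dc Y ip 0 ip) *: z.
Proof.
move=> him hip.
have hz : z = br (row i X) (row ip X) by rewrite hcoef hip hc_up // eqxx scale1r.
have J := brJ Y (row i X) (row ip X); rewrite -hz in J.
have e2 : br (row i X) (br (row ip X) Y) = - (Dc Y ip 0 ip) *: z.
  rewrite (brA (row ip X) Y) -(DcE Y ip) brNr (brA (row i X)) opprK brX.
  congr (_ *: _); under eq_bigr => j _ do rewrite hc_dn // mulrN.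
  by rewrite sumrN (sum_delta _ (esym hip)).
have e3 : br (row ip X) (br Y (row i X)) = - (Dc Y i 0 i) *: z.
  rewrite -(DcE Y i) (brA (row ip X)) brX hip.
  rewrite scaleNr; congr (- (_ *: _)); under eq_bigr => j _ do rewrite hc_up //.
  by rewrite (sum_delta _ (erefl _)).
rewrite e2 e3 in J; move/eqP: J; rewrite -addrA addr_eq0 => /eqP ->.
by rewrite !scaleNr -opprD opprK scalerDl addrC.
Qed.

Definition phi (Y : V) := Dc Y ord_max 0 ord_max.

Lemma br_z Y : br Y z = phi Y *: z.
Proof.
have h0 : (0 < N)%N by [].
have h1 : (m < N)%N by lia.
have := @jac Y (Ordinal h0) (Ordinal h1) hm (erefl _).
set s := (_ + _) => hs; rewrite hs; congr (_ *: _).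
rewrite /phi /Dc hs /coords -scalemxAl -/(coords z) rowE coordsK !mxE eqxx /=.
by rewrite eqxx mulr1.
Qed.

Lemma phi_lin a x y : phi (a *: x + y) = a * phi x + phi y.
Proof. by apply: scal_z; rewrite -br_z (brL z) !br_z scalerDl scalerA. Qed.

Lemma phi_h u : phi (u *m X) = 0.
Proof.
apply: scal_z; rewrite -br_z brX scale0r big1 ?scale0r // => j _.
by rewrite hc_last mulr0.
Qed.

Section Basis.
Variables (e : V) (he : ~~ (e <= X)%MS).
Definition Pe : 'M[R]_nn := col_mx e X.

Lemma e0 : e != 0.
Proof. by apply: contraNneq he => ->; rewrite sub0mx. Qed.

Lemma Pe_unit : Pe \in unitmx.
Proof.
rewrite -row_free_unit /row_free.
have re : \rank e = 1%N by rewrite rank_rV e0.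
have r1 : \rank (e :&: X)%MS = 0%N.
  have hle := mxrankS (capmxSl e X); rewrite re in hle.
  case: (mxrank_leqif_sup (capmxSl e X)) => _ heq.
  have : \rank (e :&: X)%MS != \rank e.
    by rewrite heq; apply: contra he => h; exact: submx_trans h (capmxSr _ _).
  rewrite re; lia.
have rX : \rank X = N by have := hrf; rewrite /row_free => /eqP.
have := mxrank_sum_cap e X; rewrite r1 re rX addn0 => hs.
have -> : \rank Pe = \rank (e + X)%MS.
  by apply/esym/eqmx_rank; apply/eqmxP; exact: addsmxE.
by rewrite hs.
Qed.


Lemma coordPe (u : 'rV[R]_N) : (u *m X) *m invmx Pe = (row_mx (0 : 'M[R]_1) u : 'rV[R]_nn).
Proof.
have <- : row_mx (0 : 'M[R]_1) u *m Pe = u *m X by rewrite /Pe mul_row_col mul0mx add0r.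
by rewrite mulmxK // Pe_unit.
Qed.

Lemma decomp Y : exists t u, Y = t *: e + u *m X.
Proof.
set w : 'M[R]_(1, 1 + N) := Y *m invmx Pe.
have hY : Y = w *m Pe by rewrite /w mulmxKV // Pe_unit.
exists (lsubmx w 0 0), (rsubmx w).
rewrite hY -[w](hsubmxK w) /Pe mul_row_col row_mxKl row_mxKr.
by rewrite {1}(mx11_scalar (lsubmx w)) mul_scalar_mx.
Qed.

Lemma br_e_h Y : (br Y e <= X)%MS.
Proof.
have [t [u ->]] := decomp Y.
rewrite brDl brZl brxx scaler0 add0r brA -scaleN1r scalemx_sub //.
by rewrite hideal // submxMl.
Qed.

Lemma brhh Y1 Y2 : (br Y1 Y2 <= X)%MS.
Proof.
have [t [u ->]] := decomp Y2.
by rewrite brDr brZr addmx_sub ?scalemx_sub ?br_e_h // hideal // submxMl.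
Qed.
End Basis.

Lemma sumD Y : \sum_(k < N) Dc Y k 0 k = phi Y *+ m.+1.
Proof.
pose G (k : nat) := Dc Y (inord k) 0 (inord k).
have -> : \sum_(k < N) Dc Y k 0 k = \sum_(k < N) G k.
  by apply: eq_bigr => k _; rewrite /G inord_val.
rewrite -(big_mkord xpredT) big_nat_recr //=.
have -> : G m.*2 = phi Y.
  by rewrite /G /phi; have -> : inord m.*2 = ord_max :> 'I_N by apply/val_inj; rewrite /= inordK.
have hm2 : m.*2 = (m + m)%N by rewrite addnn.
rewrite hm2 (@big_cat_nat _ _ _ m) ?leq_addl //=.
rewrite -{2}[m]add0n big_addn addnK -big_split /=.
rewrite (eq_big_nat _ _ (F2 := fun _ => phi Y)); last first.
  move=> k /andP [_ hk].
  have hk1 : (k < N)%N by lia.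
  have hk2 : (k + m < N)%N by lia.
  have := @jac Y (inord k) (inord (k + m)) _ _.
  rewrite !inordK // => /(_ hk (erefl _)); rewrite br_z => /scal_z ->.
  by rewrite /G.
by rewrite sumr_const_nat subn0 mulrS addrC.
Qed.

Lemma e_ex : exists e : V, ~~ (e <= X)%MS.
Proof.
have : ~~ (1%:M <= X)%MS.
  apply/negP => /mxrankS; rewrite mxrank1.
  have := rank_leq_row X; lia.
by case/row_subPn => i hi; exists (row i 1%:M).
Qed.

Lemma tr_ad Y : \tr (ad_mx br Y) = phi Y *+ m.+1.
Proof.
have [e he] := e_ex.
rewrite /ad_mx (tr_basis (brR Y) (Pe_unit he)) -sumD.
change (\sum_(i < 1 + N) (br Y (row i (Pe e)) *m invmx (Pe e)) 0 i = \sum_(k < N) Dc Y k 0 k).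
rewrite big_split_ord /= big_ord1.
rewrite rowKu.
have -> : row 0 e = e by apply/rowP => j; rewrite mxE.
rewrite -(coordsE (br_e_h he Y)) coordPe // (@row_mxEl _ 1 1 N) mxE add0r.
apply: eq_bigr => k _.
by rewrite rowKd -DcE coordPe // (@row_mxEr _ 1 1 N).
Qed.

Lemma unimod_phi : unimodular br -> forall Y, phi Y = 0.
Proof.
move=> hu Y; have := hu Y; rewrite tr_ad => /eqP.
by rewrite mulrn_eq0 /= => /eqP.
Qed.

Lemma nonunimod_phi : ~ unimodular br -> exists Y, phi Y != 0.
Proof.
move=> hu; apply: Classical_Prop.NNPP => h; apply: hu => Y; rewrite tr_ad.
have : ~~ (phi Y != 0) by apply/negP => hY; apply: h; exists Y.
by rewrite negbK => /eqP ->; rewrite mul0rn.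
Qed.

Lemma partA : ~ unimodular br -> forall ip, is_inner_product ip ->
  ~ exists B : 'M[R]_nn, geodesic_basis br ip B.
Proof.
move=> hu ip hip [B [hB hg]].
have [Y0 hY0] := nonunimod_phi hu.
have [e he] := e_ex.
have phie : phi e != 0.
  have [t [u hY]] := decomp he Y0.
  by move: hY0; rewrite hY phi_lin phi_h addr0 mulf_eq0 negb_or => /andP[_].
have perp : forall w, geodesic br ip w -> ip w z = 0.
  move=> w [w0 hw].
  have [t [u hwd]] := decomp he w.
  case: (eqVneq t 0) => [t0|tn0]; last first.
    have pw : phi w != 0 by rewrite hwd phi_lin phi_h addr0 mulf_neq0.
    have := hw z; rewrite br_z (ipZr hip) => /eqP; rewrite mulf_eq0 (negbTE pw) /=.
    by move/eqP.
  rewrite t0 scale0r add0r in hwd.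
  case: (boolP [exists k : 'I_N, ((k : nat) < m.*2)%N && (u 0 k != 0)]).
    case/existsP => k /andP [hk uk].
    have hkz s : s != 0 -> ip w (s *: z) = 0 -> ip w z = 0.
      by move=> s0; rewrite (ipZr hip) => /eqP; rewrite mulf_eq0 (negbTE s0) /= => /eqP.
    case: (ltnP k m) => hkm.
      have hk1 : (k + m < N)%N by lia.
      have := hw (row (inord (k + m)) X); rewrite {2}hwd brX inordK //.
      under eq_bigr => j _ do rewrite hc_up //.
      by rewrite (sum_delta _ (erefl _)); apply: hkz.
    have hk1 : (k - m < N)%N by lia.
    have hk2 : (k - m < m)%N by lia.
    have := hw (row (inord (k - m)) X); rewrite {2}hwd brX inordK //.
    under eq_bigr => j _ do rewrite hc_dn // mulrN.
    rewrite sumrN (@sum_delta _ k (k - m + m)%N); last by rewrite subnK.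
    by apply: hkz; rewrite oppr_eq0.
  move=> /existsPn hno.
  have hw' : w = u 0 ord_max *: z.
    rewrite hwd mulmx_sum_row (bigD1 ord_max) //= big1 ?addr0 // => k hk.
    have := hno k; rewrite negb_and negbK.
    have -> : ((k : nat) < m.*2)%N.
      by have := ltn_ord k; move: hk; rewrite -val_eqE /= => hk; lia.
    by move=> /= /eqP ->; rewrite scale0r.
  have a0 : u 0 ord_max != 0 by apply: contraNneq w0 => h; rewrite hw' h scale0r.
  exfalso; have := hw Y0; rewrite hw' brZl brA br_z scalerN scalerA (ipZl hip) (ipNr hip).
  rewrite (ipZr hip) => /eqP; rewrite mulf_eq0 oppr_eq0 !mulf_eq0 (negbTE a0) (negbTE hY0) /=.
  by rewrite gt_eqF // (ip_gt0 hip z0).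
have hBu : B \in unitmx by rewrite -row_free_unit.
have : ip z z = 0.
  rewrite -{1}[z](mulmxKV hBu) mulmx_sum_row (ip_suml hip) big1 // => i _.
  by rewrite (ipZl hip) perp ?mulr0 //; apply: hg.
by move/eqP; rewrite gt_eqF // (ip_gt0 hip z0).
Qed.

Lemma liftE0 k (a : 'I_k) : (lift ord0 a == ord0) = false.
Proof. by apply/negbTE; rewrite eq_sym neq_lift. Qed.
Lemma liftE0' k (a : 'I_k) : (ord0 == lift ord0 a) = false.
Proof. by apply/negbTE; rewrite neq_lift. Qed.

Lemma partB : unimodular br -> forall ip, is_inner_product ip ->
  exists B : 'M[R]_nn, geodesic_basis br ip B /\ orthonormal_rows ip B.
Proof.
move=> hu ip hip.
have phi0 := unimod_phi hu.
have bz Y : br Y z = 0 by rewrite br_z phi0 scale0r.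
have hr1 : (1 <= \rank ((1%:M : 'M[R]_nn) :&: perpK ip X))%N.
  have := perpK_rank ip (1%:M : 'M[R]_nn) X; rewrite mxrank1; lia.
have [g1 [g1T g1o]] := onb_exists hip hr1.
set e' := g1 ord0.
have hee : ip e' e' = 1 by rewrite /e' g1o eqxx.
have he'h k : ip e' (row k X) = 0.
  exact: (perpKP hip (submx_trans (g1T ord0) (capmxSr _ _))).
have he'hu u : ip e' (u *m X) = 0.
  rewrite mulmx_sum_row (ip_sumr hip) big1 // => k _.
  by rewrite (ipZr hip) he'h mulr0.
have he' : ~~ (e' <= X)%MS.
  apply/negP => /coordsE hc; move: hee; rewrite -{2}hc he'hu => /eqP.
  by rewrite eq_sym oner_eq0.
set z' := nrm ip z.
have hzz : ip z' z' = 1 by rewrite (nrmE hip z0).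
have hez : ip e' z' = 0 by rewrite /z' /nrm (ipZr hip) he'h mulr0.
have rX : \rank X = N by have := hrf; rewrite /row_free => /eqP.
have hrW : (m.*2 <= \rank (X :&: perpK ip z))%N.
  have := perpK_rank ip X z; rewrite rX; lia.
have [g [gT go]] := onb_exists hip hrW.
have rowz (j : 'I_1) : row j z = z by apply/rowP => l; rewrite !mxE; case: j => [[]].
have PP v : (v <= X :&: perpK ip z)%MS -> (v <= X)%MS /\ ip v z = 0.
  rewrite sub_capmx => /andP [h1 h2]; split => //.
  by have := perpKP hip h2 ord0; rewrite rowz.
pose bf (g : 'I_m.*2 -> V) (i : 'I_nn) :=
  if unlift ord0 i is Some i1 then (if unlift ord0 i1 is Some i2 then g i2 else z') else e'.
have orth : forall g : 'I_m.*2 -> V, onfam ip g ->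
    (forall i, (g i <= X)%MS /\ ip (g i) z = 0) -> orthonormal_rows ip (\matrix_i bf g i).
  move=> h ho hP i j; rewrite !rowK /bf.
  have heg k : ip e' (h k) = 0 by case: (hP k) => /coordsE <- _; rewrite he'hu.
  have hzg k : ip z' (h k) = 0.
    by rewrite /z' /nrm (ipZl hip) (ipC hip) (proj2 (hP k)) mulr0.
  case: unliftP => [i1 ->|->]; [case: unliftP => [i2 ->|->]|];
  (case: unliftP => [j1 ->|->]; [case: unliftP => [j2 ->|->]|]);
  rewrite ?eqxx ?(inj_eq lift_inj) ?liftE0 ?liftE0'.
  - exact: ho.
  - by rewrite (ipC hip) hzg.
  - by rewrite (ipC hip) heg.
  - by rewrite hzg.
  - by rewrite hzz.
  - by rewrite (ipC hip) hez.
  - by rewrite heg.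
  - by rewrite hez.
  - by rewrite hee.
have gP i : (g i <= X)%MS /\ ip (g i) z = 0 by apply: PP.
have o0 := orth g go gP.
have bze' : br e' z' = 0 by rewrite /z' /nrm brZr bz scaler0.
have hsum : \sum_i ip (g i) (br (g i) e') = 0.
  have := hu e'; rewrite /ad_mx (tr_onb hip o0 (brR e')) big_ord_recl big_ord_recl.
  rewrite !rowK /bf /= !liftK !unlift_none brxx bze' !(ip0l hip) !add0r.
  under eq_bigr => i _ do rewrite rowK /bf !liftK brA (ipNl hip) (ipC hip).
  by rewrite sumrN => /eqP; rewrite oppr_eq0 => /eqP.
pose Pp v := (v <= X)%MS /\ ip v z = 0.
have Pcl : forall a b x y, Pp x -> Pp y -> Pp (a *: x + b *: y).
  move=> a b x y [hx1 hx2] [hy1 hy2]; split; first by rewrite addmx_sub ?scalemx_sub.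
  by rewrite (ipDl hip) !(ipZl hip) hx2 hy2 !mulr0 addr0.
have [g' [go' [gP' gq']]] := zero_diag hip (brL e') Pcl (leqnn _) go gP hsum.
have oB := orth g' go' gP'.
exists (\matrix_i bf g' i); split => //; split.
  by rewrite row_free_unit; exact: (onb_coord hip oB).1.
move=> i; split.
  apply/eqP => h; have := oB i i; rewrite h (ip0l hip) eqxx => /eqP.
  by rewrite eq_sym oner_eq0.
rewrite rowK /bf; case: unliftP => [i1 _|_]; [case: unliftP => [i2 _|_]|].
- move=> Y; have [t [u ->]] := decomp he' Y.
  rewrite brDr brZr (ipDr hip) (ipZr hip) gq' mulr0 add0r.
  have [s hs] := brXX (coords (g' i2)) u; rewrite (coordsE (proj1 (gP' i2))) in hs.
  by rewrite hs (ipZr hip) (proj2 (gP' i2)) mulr0.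
- by move=> Y; rewrite /z' /nrm brZl brA bz oppr0 scaler0 (ip0r hip).
- by move=> Y; rewrite -(coordsE (brhh he' e' Y)) he'hu.
Qed.

End Heis.

Theorem theorem1p4 (R : realType) (n m : nat) (hm : (0 < m)%N)
    (br : 'rV[R]_n -> 'rV[R]_n -> 'rV[R]_n) (hbr : is_lie_bracket br)
    (X : 'M[R]_(m.*2.+1, n)) (hX : heisenberg_codim1_ideal br X) :
  (~ unimodular br ->
     forall ip : 'rV[R]_n -> 'rV[R]_n -> R, is_inner_product ip ->
       ~ exists B : 'M[R]_n, geodesic_basis br ip B)
  /\
  (unimodular br ->
     forall ip : 'rV[R]_n -> 'rV[R]_n -> R, is_inner_product ip ->
       exists B : 'M[R]_n, geodesic_basis br ip B /\ orthonormal_rows ip B).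
Proof.
have hn : n = m.*2.+2.
  by case: hX => hrf hr _ _; rewrite -hr; move/eqP: hrf => ->.
subst n.
split.
  exact: (partA hm hbr hX).
exact: (partB hm hbr hX).
Qed.
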